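(* Let $k$ be a field, $d_1,\ldots,d_n$ positive integers, $A=k[x_1, \ldots, x_n]/(x_1^{d_1}, \ldots, x_n^{d_n})$, and suppose that $t=\sum_{i=1}^n(d_i-1)$ is odd. If $A$ has the weak Lefschetz property, then so does $A[x]/(x^2)$, where $x$ is a new variable of degree $1$.
   Context: Algebras are graded by degree, $A=\bigoplus_{i\ge0}A_i$. A graded artinian algebra $A$ has the weak Lefschetz property if there is a linear form $\ell\in A_1$ such that for every $i$ the map $A_i\to A_{i+1}$, $a\mapsto \ell a$, is injective or surjective. *)

(* Defs.v *)
From HB Require Import structures.
From mathcomp Require Import all_boot all_order all_algebra.
From mathcomp Require Import mpoly.
Set Implicit Arguments. Unset Strict Implicit. Unset Printing Implicit Defensive.
Import GRing.Theory.
Local Open Scope ring_scope.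

(* p is homogeneous of degree i (the zero polynomial is homogeneous of every degree). *)
Definition homog_of_deg (k : fieldType) (n : nat) (i : nat) (p : {mpoly k[n]}) : Prop :=
  forall m, m \in msupp p -> mdeg m = i.

Definition in_mci_ideal (k : fieldType) (n : nat) (d : 'I_n -> nat) (p : {mpoly k[n]}) : Prop :=
  exists h : 'I_n -> {mpoly k[n]}, p = \sum_(j < n) h j * 'X_j ^+ (d j).

(* A = k[x]/I_d, A_i = R_i / (I_d)_i.  Multiplication by the class of l
   (l homogeneous of degree 1) from A_i to A_{i+1}: *)
Definition mult_injective (k : fieldType) (n : nat) (d : 'I_n -> nat)
    (l : {mpoly k[n]}) (i : nat) : Prop :=
  forall f : {mpoly k[n]}, homog_of_deg i f ->
    in_mci_ideal d (l * f) -> in_mci_ideal d f.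

Definition mult_surjective (k : fieldType) (n : nat) (d : 'I_n -> nat)
    (l : {mpoly k[n]}) (i : nat) : Prop :=
  forall g : {mpoly k[n]}, homog_of_deg i.+1 g ->
    exists2 f : {mpoly k[n]}, homog_of_deg i f & in_mci_ideal d (g - l * f).

Definition mci_WLP (k : fieldType) (n : nat) (d : 'I_n -> nat) : Prop :=
  exists2 l : {mpoly k[n]}, homog_of_deg 1 l &
    forall i : nat, mult_injective d l i \/ mult_surjective d l i.

(* The exponent vector of A[x]/(x^2): the new variable x is the last one,
   x_n, with exponent 2. *)
Definition extend_exp (n : nat) (d : 'I_n -> nat) (j : 'I_n.+1) : nat :=
  if unlift ord_max j is Some j' then d j' else 2%N.

(* Main.v *)
Require Import Defs.
From mathcomp Require Import all_boot all_order all_algebra.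
From mathcomp Require Import mpoly.
From mathcomp Require Import zify.
Set Implicit Arguments. Unset Strict Implicit. Unset Printing Implicit Defensive.
Import GRing.Theory.
Local Open Scope ring_scope.

Lemma sq_inj_surj (K : fieldType) N (M : 'M[K]_N) :
  (forall v : 'rV_N, v *m M = 0 -> v = 0) <-> (forall w : 'rV_N, exists v, w = v *m M).
Proof.
split=> [inj w | surj].
  have rf : row_full M by rewrite row_full_unit -row_free_unit; exact: inj_row_free.
  have /submxP [D ->] : (w <= M)%MS by exact: submx_full.
  by exists D.
have [f hf] := fin_all_exists (fun i : 'I_N => surj (row i 1%:M)).
have rf : row_full M.
  apply/row_fullP; exists (\matrix_i f i); apply/row_matrixP => i.
  by rewrite row_mul rowK -hf.
move=> v vM; have rfr : row_free M by rewrite row_free_unit -row_full_unit.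
by apply: (row_free_inj rfr); rewrite vM mul0mx.
Qed.

Lemma set_inj_surj (K : fieldType) (T1 T2 : finType) (A : {pred T1}) (B : {pred T2})
    (W : T1 -> T2 -> K) :
  #|A| = #|B| ->
  (forall phi : T1 -> K, (forall b, b \in B -> \sum_(a in A) phi a * W a b = 0) ->
      forall a, a \in A -> phi a = 0) <->
  (forall psi : T2 -> K, exists phi : T1 -> K, forall b, b \in B ->
      psi b = \sum_(a in A) phi a * W a b).
Proof.
move=> eqAB; set N := #|A|.
pose al (i : 'I_N) := enum_val (A := A) i.
pose be (j : 'I_N) := enum_val (A := B) (cast_ord eqAB j).
pose M := \matrix_(i, j) W (al i) (be j).
pose vec (phi : T1 -> K) : 'rV[K]_N := \row_i phi (al i).
pose fun_of (v : 'rV[K]_N) (a : T1) : K := \sum_i (al i == a)%:R * v 0 i.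
have alP i : al i \in A by exact: enum_valP.
have beP j : be j \in B by exact: enum_valP.
have al_inj : injective al by move=> i j /enum_val_inj.
have fun_ofK v i : fun_of v (al i) = v 0 i.
  rewrite /fun_of (bigD1 i) //= eqxx mul1r big1 ?addr0 // => j ji.
  by rewrite (inj_eq al_inj) (negbTE ji) mul0r.
have vecM phi j : (vec phi *m M) 0 j = \sum_(a in A) phi a * W a (be j).
  rewrite mxE (big_enum_val (A:=A)) /=.
  by apply: eq_bigr => i _; rewrite !mxE.
have alE a : a \in A -> exists i, a = al i.
  move=> aA; exists (enum_rank_in aA a); by rewrite /al enum_rankK_in.
have beE b : b \in B -> exists j, b = be j.
  move=> bB; exists (cast_ord (esym eqAB) (enum_rank_in bB b)).
  by rewrite /be cast_ordKV enum_rankK_in.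
have sumfun v b : \sum_(a in A) fun_of v a * W a b = \sum_i v 0 i * W (al i) b.
  rewrite (big_enum_val (A:=A)) /=.
  by apply: eq_bigr => i _; rewrite fun_ofK.
have vMfun v j : (v *m M) 0 j = \sum_i v 0 i * W (al i) (be j).
  by rewrite mxE; apply: eq_bigr => i _; rewrite mxE.
split=> [inj psi | surj phi hphi a aA].
  have minj : forall v : 'rV_N, v *m M = 0 -> v = 0.
    move=> v vM0; apply/rowP => i; rewrite mxE -fun_ofK; apply: inj (alP i).
    move=> b /beE [j ->]; rewrite sumfun -vMfun vM0 mxE //.
  have [v hv] := (proj1 (sq_inj_surj M)) minj (\row_j psi (be j)).
  exists (fun_of v) => b /beE [j ->]; rewrite sumfun -vMfun -hv mxE //.
have msurj : forall w : 'rV_N, exists v, w = v *m M.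
  move=> w; have [phi0 hphi0] := surj (fun b => \sum_j (be j == b)%:R * w 0 j).
  exists (vec phi0); apply/rowP => j; rewrite vecM -hphi0 //.
  rewrite (bigD1 j) //= eqxx mul1r big1 ?addr0 // => j' j'j.
  have -> : (be j' == be j) = false.
    apply/negbTE; apply: contra j'j => /eqP /enum_val_inj /cast_ord_inj ->; done.
  by rewrite mul0r.
have vM0 : vec phi *m M = 0.
  by apply/rowP => j; rewrite vecM hphi // mxE.
have := (proj2 (sq_inj_surj M)) msurj _ vM0.
move=> /rowP h; have [i ->] := alE a aA; by have := h i; rewrite !mxE.
Qed.

Definition stdm n (d : 'I_n -> nat) (m : 'X_{1..n}) : bool := [forall j, (m j < d j)%N].

Definition Lf (k : fieldType) n (c : 'I_n -> k) (phi : 'X_{1..n} -> k) (m : 'X_{1..n}) : k :=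
  \sum_j c j * (if (0 < m j)%N then phi (m - U_(j))%MM else 0).

Definition lin (k : fieldType) n (c : 'I_n -> k) : {mpoly k[n]} := \sum_j c j *: 'X_j.

Definition build (k : fieldType) n (d : 'I_n -> nat) (i : nat) (phi : 'X_{1..n} -> k)
  : {mpoly k[n]} :=
  \sum_(x : 'X_{1..n < i.+1} | stdm d x && (mdeg x == i)) phi x *: 'X_[x].

Section Coef.
Variables (k : fieldType) (n : nat).
Implicit Types (f g p : {mpoly k[n]}) (m : 'X_{1..n}).

Lemma mcoeffMX0 f (e m : 'X_{1..n}) : (f * 'X_[e])@_m != 0 -> (e <= m)%MM.
Proof.
rewrite -mcoeff_msupp (perm_mem (msuppMX f e)) => /mapP [m' _ ->].
exact: lem_addr.
Qed.

Lemma coefX f j m : ('X_j * f)@_m = if (0 < m j)%N then f@_(m - U_(j))%MM else 0.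
Proof.
rewrite mulrC; case: posnP => mj.
  apply/eqP; apply/negP => /negP /mcoeffMX0; rewrite lep1mP mj; done.
have -> : m = (U_(j) + (m - U_(j)))%MM by rewrite addmC submK // lep1mP -lt0n mj.
by rewrite mcoeffMX addmC addmK.
Qed.

Lemma coefL (c : 'I_n -> k) f m : (lin c * f)@_m = Lf c (fun x => f@_x) m.
Proof.
rewrite /lin /Lf mulr_suml raddf_sum; apply: eq_bigr => j _.
by rewrite -scalerAl /= mcoeffZ coefX.
Qed.

Lemma homog_coef i p : homog_of_deg i p -> forall m, mdeg m != i -> p@_m = 0.
Proof.
move=> hp m; apply: contraNeq; rewrite -mcoeff_msupp => /hp ->; done.
Qed.

Lemma coef_homog i p : (forall m, mdeg m != i -> p@_m = 0) -> homog_of_deg i p.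
Proof.
move=> h m; rewrite mcoeff_msupp; apply: contraNeq => /h ->; done.
Qed.

Lemma lin_coef (c : 'I_n -> k) m : (lin c)@_m = \sum_j c j * (U_(j)%MM == m)%:R.
Proof.
by rewrite /lin raddf_sum; apply: eq_bigr => j _; rewrite /= mcoeffZ mcoeffX.
Qed.

Lemma lin_homog (c : 'I_n -> k) : homog_of_deg 1 (lin c).
Proof.
apply: coef_homog => m hm; rewrite lin_coef big1 // => j _.
case: eqP => [ej|]; last by rewrite mulr0.
by move: hm; rewrite -ej mdeg1.
Qed.

Lemma homog1_lin (l : {mpoly k[n]}) : homog_of_deg 1 l -> l = lin (fun j => l@_U_(j)).
Proof.
move=> hl; apply/mpolyP => m; rewrite lin_coef.
have [/eqP m1|m1] := eqVneq (mdeg m) 1%N.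
  move/mdeg1P: m1 => [i /eqP ->].
  rewrite (bigD1 i) //= eqxx mulr1 big1 ?addr0 // => j ji.
  by rewrite eq_mnm1 (negbTE ji) mulr0.
rewrite (homog_coef hl m1) big1 // => j _.
case: eqP => [ej|]; last by rewrite mulr0.
by move: m1; rewrite -ej mdeg1.
Qed.

End Coef.

Section Ideal.
Variables (k : fieldType) (n : nat) (d : 'I_n -> nat).
Implicit Types (f g p : {mpoly k[n]}) (m : 'X_{1..n}).

Lemma ideal_coef p : in_mci_ideal d p <-> forall m, stdm d m -> p@_m = 0.
Proof.
split=> [[h ->] m sm | h].
  rewrite raddf_sum big1 //= => j _; rewrite mpolyXn.
  apply/eqP; apply/negP => /negP /mcoeffMX0 /mnm_lepP /(_ j).
  rewrite mulmnE mnm1E eqxx mul1n => H.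
  by move/forallP: sm => /(_ j); rewrite ltnNge H.
pose pk m := [pick j | (d j <= m j)%N].
exists (fun j => \sum_(m <- msupp p | pk m == Some j) p@_m *: 'X_[m - U_(j) *+ d j]).
rewrite {1}(mpolyE p).
under [RHS]eq_bigr do rewrite mulr_suml big_mkcond.
rewrite exchange_big /=; apply: eq_bigr => m _.
rewrite /pk; case: pickP => [j0 hj0 | hn].
  rewrite (bigD1 j0) //= eqxx big1 ?addr0; last first.
    by move=> j jj0; case: eqP => // -[] /esym /eqP; rewrite (negbTE jj0).
  rewrite mpolyXn -scalerAl -mpolyXD submK //; apply/mnm_lepP => i.
  rewrite mulmnE mnm1E; case: eqP => [<-|_]; by rewrite ?mul1n ?mul0n.
have sm : stdm d m by apply/forallP => j; rewrite ltnNge hn.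
by rewrite h // scale0r big1 // => j _; case: eqP.
Qed.

Lemma build_coef i (phi : 'X_{1..n} -> k) m :
  (build d i phi)@_m = if stdm d m && (mdeg m == i) then phi m else 0.
Proof.
rewrite /build raddf_sum /=.
under eq_bigr do rewrite mcoeffZ mcoeffX.
case: ifP => [/andP [sm /eqP dm] | nc].
  have hb : (mdeg m < i.+1)%N by rewrite dm.
  rewrite (bigD1 (BMultinom hb)) /=; last by rewrite sm dm eqxx.
  rewrite eqxx mulr1 big1 ?addr0 // => x /andP [_ xne].
  by rewrite bmeqP /= in xne; rewrite (negbTE xne) mulr0.
rewrite big1 // => x /andP [sx dx]; case: eqP => [xm|]; last by rewrite mulr0.
by move: nc; rewrite -xm sx dx.
Qed.

Lemma build_homog i (phi : 'X_{1..n} -> k) : homog_of_deg i (build d i phi).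
Proof.
apply: coef_homog => m hm; rewrite build_coef; case: ifP => // /andP [_ h].
by rewrite h in hm.
Qed.

End Ideal.

Definition CINJ (k : fieldType) n (d : 'I_n -> nat) (c : 'I_n -> k) i :=
  forall phi : 'X_{1..n} -> k,
    (forall mu, stdm d mu -> mdeg mu = i.+1 -> Lf c phi mu = 0) ->
    forall nu, stdm d nu -> mdeg nu = i -> phi nu = 0.

Definition CSURJ (k : fieldType) n (d : 'I_n -> nat) (c : 'I_n -> k) i :=
  forall psi : 'X_{1..n} -> k, exists phi : 'X_{1..n} -> k,
    forall mu, stdm d mu -> mdeg mu = i.+1 -> psi mu = Lf c phi mu.

Section Conv.
Variables (k : fieldType) (n : nat) (d : 'I_n -> nat) (c : 'I_n -> k).
Implicit Types (f g p : {mpoly k[n]}) (m mu nu : 'X_{1..n}).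

Lemma mdegBU mu j : (0 < mu j)%N -> mdeg (mu - U_(j))%MM = (mdeg mu).-1.
Proof.
move=> h; have e : mu = ((mu - U_(j)) + U_(j))%MM by rewrite submK // lep1mP -lt0n.
by rewrite {2}e mdegD mdeg1 addn1.
Qed.

Lemma stdmB mu (e : 'X_{1..n}) : stdm d mu -> stdm d (mu - e)%MM.
Proof.
move=> /forallP h; apply/forallP => j; rewrite mnmBE.
exact: leq_ltn_trans (leq_subr _ _) (h j).
Qed.

Lemma Lf_ext (phi phi' : 'X_{1..n} -> k) mu : stdm d mu ->
  (forall nu, stdm d nu -> mdeg nu = (mdeg mu).-1 -> phi nu = phi' nu) ->
  Lf c phi mu = Lf c phi' mu.
Proof.
move=> sm h; apply: eq_bigr => j _; case: ifP => // mj.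
by rewrite h ?stdmB ?mdegBU.
Qed.

Lemma prod_homog_coef i f mu : homog_of_deg i f -> mdeg mu != i.+1 ->
  (lin c * f)@_mu = 0.
Proof.
move=> hf hm; rewrite coefL /Lf big1 // => j _; case: ifP => mj; last by rewrite mulr0.
rewrite (homog_coef hf) ?mulr0 // mdegBU //.
apply: contra hm => /eqP <-; rewrite prednK //.
move: mj; rewrite mdegE (bigD1 j) //= => mj; exact: leq_trans mj (leq_addr _ _).
Qed.

Lemma conv_inj_C i : mult_injective d (lin c) i -> CINJ d c i.
Proof.
move=> hinj phi H.
have hI : in_mci_ideal d (lin c * build d i phi).
  apply/ideal_coef => mu sm; have [dm|dm] := eqVneq (mdeg mu) i.+1.
    rewrite coefL -(H mu sm dm); apply: Lf_ext => // nu snu; rewrite dm /= => dn.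
    by rewrite build_coef snu dn eqxx.
  exact: prod_homog_coef (@build_homog k n d i phi) dm.
move/ideal_coef: (hinj _ (@build_homog k n d i phi) hI) => h0 nu snu dn.
by have := h0 nu snu; rewrite build_coef snu dn eqxx.
Qed.

Lemma conv_C_inj i : CINJ d c i -> mult_injective d (lin c) i.
Proof.
move=> hC f hf /ideal_coef hI; apply/ideal_coef => nu snu.
have [dn|dn] := eqVneq (mdeg nu) i; last exact: homog_coef hf _ dn.
apply: (hC (fun x => f@_x)) snu dn => mu sm dm.
by rewrite -coefL hI.
Qed.

Lemma conv_surj_C i : mult_surjective d (lin c) i -> CSURJ d c i.
Proof.
move=> hs psi; have [f hf /ideal_coef hI] := hs _ (@build_homog k n d i.+1 psi).
exists (fun x => f@_x) => mu sm dm.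
have := hI mu sm; rewrite mcoeffB build_coef sm dm eqxx /= coefL => /eqP.
by rewrite subr_eq0 => /eqP.
Qed.

Lemma conv_C_surj i : CSURJ d c i -> mult_surjective d (lin c) i.
Proof.
move=> hC g hg; have [phi hphi] := hC (fun x => g@_x).
exists (build d i phi); first exact: build_homog.
apply/ideal_coef => mu sm; rewrite mcoeffB.
have [dm|dm] := eqVneq (mdeg mu) i.+1; last first.
  by rewrite (homog_coef hg dm) (prod_homog_coef (@build_homog k n d i phi) dm) subr0.
rewrite hphi // coefL; apply/eqP; rewrite subr_eq0; apply/eqP.
apply: Lf_ext => // nu snu; rewrite dm /= => dn.
by rewrite build_coef snu dn eqxx.
Qed.

End Conv.

Definition shift (k : fieldType) n (j : 'I_n) (phi : 'X_{1..n} -> k) (x : 'X_{1..n}) : k :=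
  if (0 < x j)%N then phi (x - U_(j))%MM else 0.

Section PropS.
Variables (k : fieldType) (n : nat) (d : 'I_n -> nat) (c : 'I_n -> k).
Implicit Types (m mu nu : 'X_{1..n}) (phi psi : 'X_{1..n} -> k).

Lemma Lf_shift j phi mu : Lf c (shift j phi) mu = shift j (Lf c phi) mu.
Proof.
rewrite /shift /Lf; case: posnP => hj.
  rewrite big1 // => r _; case: ifP => _; last by rewrite mulr0.
  by rewrite mnmBE hj sub0n /= mulr0.
apply: eq_bigr => r _; rewrite !mnmBE !mnm1E.
have [->|rj] := eqVneq r j.
  by rewrite hj.
rewrite /= !subn0 hj.
have -> : (mu - U_(r) - U_(j) = mu - U_(j) - U_(r))%MM by rewrite !submDA addmC.
by case: ifP => //; rewrite mulr0.
Qed.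

Lemma Lf_sum (F : 'I_n -> 'X_{1..n} -> k) mu :
  Lf c (fun x => \sum_j F j x) mu = \sum_j Lf c (F j) mu.
Proof.
rewrite /Lf exchange_big /=; apply: eq_bigr => r _.
case: ifP => _; first by rewrite mulr_sumr.
by rewrite mulr0 big1 // => j _; rewrite mulr0.
Qed.

Lemma Lf_eq phi phi' mu : phi =1 phi' -> Lf c phi mu = Lf c phi' mu.
Proof. by move=> e; apply: eq_bigr => j _; rewrite e. Qed.

Lemma CSURJ_up i : CSURJ d c i -> CSURJ d c i.+1.
Proof.
move=> hC psi.
pose jj mu := [pick j | (0 < mu j)%N].
pose psij j nu := if jj (nu + U_(j))%MM == Some j then psi (nu + U_(j))%MM else 0.
have [F hF] := fin_all_exists (fun j => hC (psij j)).
exists (fun x => \sum_j shift j (F j) x) => mu sm dm.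
rewrite Lf_sum; under eq_bigr do rewrite Lf_shift.
have [j0 hp hj0] : exists2 j0, jj mu = Some j0 & (0 < mu j0)%N.
  rewrite /jj; case: pickP => [j1 hj1|hn]; first by exists j1.
  have : mdeg mu = 0%N by rewrite mdegE big1 // => j _; have := hn j; case: (mu j).
  by rewrite dm.
rewrite (bigD1 j0) //= big1 ?addr0.
  rewrite /shift hj0 -hF ?stdmB ?mdegBU ?dm //.
  by rewrite /psij submK ?lep1mP -?lt0n // hp eqxx.
move=> j jj0; rewrite /shift; case: posnP => hj //.
rewrite -hF ?stdmB ?mdegBU ?dm //.
rewrite /psij submK; last by rewrite lep1mP -lt0n. rewrite hp.
by case: eqP => // -[] /esym /eqP; rewrite (negbTE jj0).
Qed.


Lemma CINJ_down i : CINJ d c i.+1 -> (i < \sum_j (d j).-1)%N -> CINJ d c i.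
Proof.
move=> hC ht phi H nu snu dn.
case: (boolP [exists j, ((nu j).+1 < d j)%N]) => [/existsP [j hj] | /existsPn hn]; last first.
  exfalso; move: ht; rewrite ltnNge -dn mdegE => /negP; apply.
  apply: leq_sum => j _; have := hn j; rewrite -leqNgt.
  by case: (d j).
have s2 : stdm d (nu + U_(j))%MM.
  apply/forallP => i0; rewrite mnmDE mnm1E; case: eqP => [<-|_].
    by rewrite addn1.
  by rewrite addn0; move/forallP: snu.
have d2 : mdeg (nu + U_(j))%MM = i.+1 by rewrite mdegD mdeg1 dn addn1.
have := hC (shift j phi) _ _ s2 d2.
  rewrite /shift mnmDE mnm1E eqxx addn1 /= addmK; apply.
move=> mu sm dm; rewrite Lf_shift /shift; case: ifP => // mj.
by apply: H; rewrite ?stdmB ?mdegBU ?dm.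
Qed.

End PropS.

Section Mid.
Variables (k : fieldType) (n : nat) (d : 'I_n -> nat) (c : 'I_n -> k).
Variables (m b : nat).
Hypothesis hb : (m.+1 < b)%N.
Implicit Types (mu nu : 'X_{1..n}) (phi psi : 'X_{1..n} -> k).

Definition Aset (i : nat) : {pred 'X_{1..n < b}} := fun x => stdm d x && (mdeg x == i).

Lemma sel_val (i : nat) (g : 'X_{1..n < b} -> k) (x : 'X_{1..n}) (hx : (mdeg x < b)%N) :
  stdm d x -> mdeg x = i ->
  \sum_(a in Aset i) g a * ((a : 'X_{1..n}) == x)%:R = g (BMultinom hx).
Proof.
move=> sx dx; rewrite (bigD1 (BMultinom hx)) /=; last by rewrite /Aset unfold_in /= sx dx eqxx.
rewrite eqxx mulr1 big1 ?addr0 // => a /andP [_ ha].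
by rewrite bmeqP /= in ha; rewrite (negbTE ha) mulr0.
Qed.

Definition Wm (a b' : 'X_{1..n < b}) : k := Lf c (fun x => ((a : 'X_{1..n}) == x)%:R) b'.

Lemma Lf_W phi mu : stdm d mu -> mdeg mu = m.+1 ->
  Lf c phi mu = \sum_(a in Aset m) phi a * Lf c (fun x => ((a : 'X_{1..n}) == x)%:R) mu.
Proof.
move=> sm dm; rewrite /Lf.
under [RHS]eq_bigr do rewrite mulr_sumr.
rewrite exchange_big /=; apply: eq_bigr => j _.
case: ifP => mj; last by rewrite big1 ?mulr0 // => a _; rewrite !mulr0.
have hx : (mdeg (mu - U_(j))%MM < b)%N by rewrite mdegBU // dm /=; exact: ltnW.
under [RHS]eq_bigr do rewrite mulrCA.
rewrite -mulr_sumr (@sel_val m (fun a => phi a) _ hx) ?stdmB ?mdegBU ?dm //.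
Qed.

Lemma middle : #|Aset m| = #|Aset m.+1| -> (CINJ d c m <-> CSURJ d c m).
Proof.
move=> hcard.
have hL := set_inj_surj Wm hcard.
have hbm : forall mu, mdeg mu = m.+1 -> (mdeg mu < b)%N by move=> mu ->.
have hbm' : forall mu, mdeg mu = m -> (mdeg mu < b)%N.
  by move=> mu ->; exact: ltn_trans hb.
have inB : forall (x : 'X_{1..n < b}) i, x \in Aset i -> stdm d x /\ mdeg x = i.
  by move=> x i; rewrite /Aset unfold_in /= => /andP [-> /eqP ->].
have BinB : forall mu i (h : (mdeg mu < b)%N), stdm d mu -> mdeg mu = i ->
   BMultinom h \in Aset i by move=> mu i h s e; rewrite /Aset unfold_in /= s e eqxx.
split=> [hI | hS].
  have INJT : forall phiT : 'X_{1..n < b} -> k,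
      (forall b', b' \in Aset m.+1 -> \sum_(a in Aset m) phiT a * Wm a b' = 0) ->
      forall a, a \in Aset m -> phiT a = 0.
    move=> phiT H a aA.
    pose phi x := \sum_(a' in Aset m) phiT a' * ((a' : 'X_{1..n}) == x)%:R.
    have [sa da] := inB _ _ aA.
    have -> : phiT a = phi a.
      rewrite /phi (@sel_val m phiT a (bmdeg a)) //; congr phiT; exact: val_inj.
    apply: hI sa da => mu sm dm.
    rewrite Lf_W // -[RHS](H (BMultinom (hbm _ dm)) (BinB _ _ _ sm dm)).
    apply: eq_bigr => a' a'A; have [sa' da'] := inB _ _ a'A.
    rewrite /phi (@sel_val m phiT a' (bmdeg a')) //.
    by congr (phiT _ * _); apply: val_inj.
  have SURJT := (proj1 hL) INJT.
  move=> psi; have [phiT hphiT] := SURJT (fun b' => psi b').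
  exists (fun x => \sum_(a' in Aset m) phiT a' * ((a' : 'X_{1..n}) == x)%:R).
  move=> mu sm dm; rewrite Lf_W //.
  have := hphiT (BMultinom (hbm _ dm)) (BinB _ _ _ sm dm); rewrite /= => ->.
  apply: eq_bigr => a' a'A; have [sa' da'] := inB _ _ a'A.
  rewrite (@sel_val m phiT a' (bmdeg a')) //.
  by congr (phiT _ * _); apply: val_inj.
have SURJT : forall psiT : 'X_{1..n < b} -> k, exists phiT : 'X_{1..n < b} -> k,
    forall b', b' \in Aset m.+1 -> psiT b' = \sum_(a in Aset m) phiT a * Wm a b'.
  move=> psiT.
  have [phi hphi] := hS (fun x => \sum_(b' in Aset m.+1) psiT b' * ((b' : 'X_{1..n}) == x)%:R).
  exists (fun a => phi a) => b' bB; have [sb db] := inB _ _ bB.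
  rewrite /Wm -Lf_W // -hphi //.
  rewrite (@sel_val m.+1 psiT b' (bmdeg b')) //.
  by congr psiT; apply: val_inj.
have INJT := (proj2 hL) SURJT.
move=> phi H nu snu dn.
apply: (INJT (fun a => phi a) _ (BMultinom (hbm' _ dn)) (BinB _ _ _ snu dn)).
move=> b' bB; have [sb db] := inB _ _ bB.
by rewrite /Wm -Lf_W // H.
Qed.

End Mid.

Section Card.
Variables (k : fieldType) (n : nat) (d : 'I_n -> nat).
Hypothesis hd : forall j, (0 < d j)%N.
Let t := (\sum_j (d j).-1)%N.
Let top : 'X_{1..n} := [multinom (d j).-1 | j < n].

Lemma mdeg_top : mdeg top = t.
Proof. by rewrite mdegE; apply: eq_bigr => j _; rewrite mnmE. Qed.

Lemma std_le_top (x : 'X_{1..n}) : stdm d x -> (x <= top)%MM.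
Proof.
move=> /forallP sx; apply/mnm_lepP => j; rewrite mnmE.
by have := sx j; case: (d j).
Qed.

Lemma mdeg_comp (x : 'X_{1..n}) : stdm d x -> mdeg (top - x)%MM = (t - mdeg x)%N.
Proof.
move=> sx; have e := submK (std_le_top sx).
by rewrite -mdeg_top -{2}e mdegD addnK.
Qed.

Lemma std_comp (x : 'X_{1..n}) : stdm d (top - x)%MM.
Proof.
apply/forallP => j; rewrite mnmBE mnmE.
by apply: leq_ltn_trans (leq_subr _ _) _; rewrite ltn_predL.
Qed.

Lemma comp_inv (x : 'X_{1..n}) : stdm d x -> (top - (top - x))%MM = x.
Proof.
move=> sx; apply/mnmP => j; rewrite !mnmBE subKn //.
by move/mnm_lepP: (std_le_top sx).
Qed.

Lemma card_sym (i j : nat) : (i + j = t)%N -> (#|@Aset n d t.+1 i| <= #|@Aset n d t.+1 j|)%N.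
Proof.
move=> hij.
have hf : forall x : 'X_{1..n < t.+1}, (mdeg (top - x)%MM < t.+1)%N.
  by move=> x; rewrite ltnS; apply: leq_trans (mdegB _ _) _; rewrite mdeg_top.
pose f (x : 'X_{1..n < t.+1}) : 'X_{1..n < t.+1} := BMultinom (hf x).
rewrite -(@card_in_image _ _ f (@Aset n d t.+1 i)); last first.
  move=> x y; rewrite /Aset !unfold_in /= => /andP [sx _] /andP [sy _] /(congr1 val) /= e.
  by apply: val_inj; rewrite /= -(comp_inv sx) e comp_inv.
apply: subset_leq_card; apply/subsetP => y /imageP [x xA ->].
move: xA; rewrite /Aset !unfold_in /= => /andP [sx /eqP dx].
by rewrite std_comp mdeg_comp // dx -hij addKn eqxx.
Qed.

End Card.

Section BExt.
Variables (k : fieldType) (n : nat) (d : 'I_n -> nat) (c : 'I_n -> k).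
Implicit Types (mu nu : 'X_{1..n}) (M : 'X_{1..n.+1}).

Definition cB (J : 'I_n.+1) : k := if unlift ord_max J is Some j then c j else 1.

Definition ext mu (e : nat) : 'X_{1..n.+1} :=
  [multinom (if unlift ord_max J is Some j then mu j else e) | J < n.+1].

Definition restr M : 'X_{1..n} := [multinom M (lift ord_max j) | j < n].

Lemma ext_lift mu e j : ext mu e (lift ord_max j) = mu j.
Proof. by rewrite mnmE liftK. Qed.

Lemma ext_max mu e : ext mu e ord_max = e.
Proof. by rewrite mnmE unlift_none. Qed.

Lemma ext_restr M : M = ext (restr M) (M ord_max).
Proof.
apply/mnmP => J; rewrite mnmE; case: unliftP => [j ->|->] //.
by rewrite mnmE.
Qed.

Lemma restr_ext mu e : restr (ext mu e) = mu.
Proof. by apply/mnmP => j; rewrite mnmE ext_lift. Qed.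

Lemma sumD1max (F : 'I_n.+1 -> k) : \sum_J F J = F ord_max + \sum_j F (lift ord_max j).
Proof. exact: (bigD1_ord ord_max (P := predT)). Qed.

Lemma sumD1maxN (F : 'I_n.+1 -> nat) : (\sum_J F J = F ord_max + \sum_j F (lift ord_max j))%N.
Proof. exact: (bigD1_ord ord_max (P := predT)). Qed.

Lemma mdeg_ext mu e : mdeg (ext mu e) = (mdeg mu + e)%N.
Proof.
rewrite !mdegE sumD1maxN ext_max addnC; congr (_ + _)%N.
by apply: eq_bigr => j _; rewrite ext_lift.
Qed.

Lemma std_ext mu e : stdm (extend_exp d) (ext mu e) = stdm d mu && (e < 2)%N.
Proof.
apply/forallP/andP => [h | [/forallP h he] J].
  split; last by have := h ord_max; rewrite ext_max /extend_exp unlift_none.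
  by apply/forallP => j; have := h (lift ord_max j); rewrite ext_lift /extend_exp liftK.
rewrite mnmE /extend_exp; case: unliftP => [j _|_] //.
Qed.

Lemma ext_subU mu e j : (ext mu e - U_(lift ord_max j))%MM = ext (mu - U_(j))%MM e.
Proof.
apply/mnmP => J; rewrite mnmBE mnm1E !mnmE; case: unliftP => [j' ->|->].
  by rewrite mnmBE mnm1E (inj_eq (@lift_inj _ ord_max)).
  by rewrite eq_sym (negbTE (neq_lift _ _)) subn0.
Qed.

Lemma ext_subUmax mu e : (ext mu e - U_(ord_max))%MM = ext mu e.-1.
Proof.
apply/mnmP => J; rewrite mnmBE mnm1E !mnmE; case: unliftP => [j' ->|->].
  by rewrite (negbTE (neq_lift _ _)) subn0.
by rewrite eqxx subn1.
Qed.

Lemma LfB_ext (phi : 'X_{1..n.+1} -> k) mu e :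
  Lf cB phi (ext mu e) =
  Lf c (fun nu => phi (ext nu e)) mu + (if (0 < e)%N then phi (ext mu e.-1) else 0).
Proof.
rewrite /Lf sumD1max addrC /cB unlift_none mul1r ext_max ext_subUmax; congr (_ + _).
by apply: eq_bigr => j _; rewrite liftK ext_lift ext_subU.
Qed.

Lemma B_CINJ i : CINJ d c i -> (forall i', i = i'.+1 -> CINJ d c i') ->
  CINJ (extend_exp d) cB i.
Proof.
move=> hA hA' phi H M; rewrite (ext_restr M) std_ext mdeg_ext.
move: (restr M) (M ord_max) => mu e /andP [smu he] dM.
have h0 : forall nu, stdm d nu -> mdeg nu = i -> phi (ext nu 0) = 0.
  apply: (hA (fun nu => phi (ext nu 0))) => mu' sm' dm'.
  have := H (ext mu' 0); rewrite std_ext sm' mdeg_ext dm' addn0 LfB_ext addr0.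
  by apply.
case: e he dM => [|[|//]] _ dM; first by apply: h0; rewrite // -dM addn0.
have E : i = (mdeg mu).+1 by rewrite -dM addn1.
apply: (hA' (mdeg mu) E (fun nu => phi (ext nu 1)) _ mu smu erefl).
move=> mu' sm' dm'.
have HH := H (ext mu' 1).
rewrite std_ext sm' mdeg_ext dm' E addn1 LfB_ext /= h0 ?addr0 in HH.
- exact: HH.
- exact: sm'.
- by rewrite dm' E.
Qed.

Lemma B_CSURJ i : CSURJ d c i.+1 -> CSURJ d c i -> CSURJ (extend_exp d) cB i.+1.
Proof.
move=> hS1 hS0 psi.
have [phi0 h0] := hS1 (fun nu => psi (ext nu 0)).
have [phi1 h1] := hS0 (fun nu => psi (ext nu 1) - phi0 nu).
exists (fun M => if M ord_max == 0%N then phi0 (restr M) else phi1 (restr M)).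
move=> M; rewrite (ext_restr M) std_ext mdeg_ext.
move: (restr M) (M ord_max) => mu e /andP [smu he] dM.
rewrite LfB_ext.
case: e he dM => [|[|//]] _ dM.
  rewrite addr0 addn0 in dM *; rewrite h0 //; apply: Lf_eq => nu.
  by rewrite ext_max eqxx restr_ext.
rewrite /= ext_max /= restr_ext.
rewrite (@Lf_eq _ _ c _ phi1); last by move=> nu; rewrite ext_max /= restr_ext.
rewrite -h1 ?subrK //.
by move: dM; rewrite addn1 => -[].
Qed.

End BExt.

Local Close Scope ring_scope.

Theorem proposition4p13 (k : fieldType) (n : nat) (d : 'I_n -> nat) :
  (forall j, 0 < d j)%N ->
  odd (\sum_(j < n) (d j).-1) ->
  mci_WLP k d ->
  mci_WLP k (extend_exp d).
Proof.
move=> hd hodd [l0 hl0 hW].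
set c := fun j => (l0@_U_(j))%R.
have el : l0 = lin c := homog1_lin hl0.
set t := (\sum_(j < n) (d j).-1)%N in hodd.
set m := t./2.
have et : t = (m + m.+1)%N.
  have := odd_double_half t; rewrite hodd -/m -addnn => <-.
  by rewrite addnS add1n.
have hW' : forall i, CINJ d c i \/ CSURJ d c i.
  move=> i; case: (hW i); rewrite el.
    by move/conv_inj_C; left.
  by move/conv_surj_C; right.
have hb : (m.+1 < t.+1)%N by rewrite ltnS et leq_addl.
have hcard : #|@Aset n d t.+1 m| = #|@Aset n d t.+1 m.+1|.
  by apply/eqP; rewrite eqn_leq !(card_sym hd) // -/t et // addnC.
have hmid := middle c hb hcard.
have [CIm CSm] : CINJ d c m /\ CSURJ d c m.
  by case: (hW' m) => h; split=> //; [apply/hmid | apply/hmid].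
have CI : forall i, (i <= m)%N -> CINJ d c i.
  have H : forall j i, (i + j)%N = m -> CINJ d c i.
    elim=> [|j IH] i e; first by move: CIm; rewrite -e addn0.
    apply: CINJ_down; first by apply: IH; rewrite -e addSn addnS.
    by rewrite -/t et -e; lia.
  by move=> i hi; apply: (H (m - i)%N); rewrite subnKC.
have CS : forall i, (m <= i)%N -> CSURJ d c i.
  have H : forall j, CSURJ d c (m + j)%N.
    by elim=> [|j IH]; [rewrite addn0 | rewrite addnS; apply: CSURJ_up].
  by move=> i hi; rewrite -(subnKC hi).
exists (lin (cB c)); first exact: lin_homog.
move=> i; case: (leqP i m) => hi.
  left; apply: conv_C_inj; apply: B_CINJ; first exact: CI.
  by move=> i' e; apply: CI; rewrite (leq_trans _ hi) // e.
right; case: i hi => // i hi.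
apply: conv_C_surj; apply: B_CSURJ; apply: CS => //.
exact: leqW.
Qed.
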